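(* Let $f:\mathbb{R}^d\to\mathbb{R}$ be bounded below by $f^*$ (i.e. $f(x)\ge f^*$ for all $x$) and smooth with non-negative constants $L_1,\dots,L_d$, i.e. $$f(y)\le f(x)+\langle\nabla f(x),y-x\rangle+\sum_{i=1}^d\frac{L_i}{2}(y_i-x_i)^2\quad\text{for all }x,y\in\mathbb{R}^d,$$ and let $\bar L:=\frac1d\sum_{i=1}^d L_i$. Suppose the Success Probability Bounds (SPB) assumption holds. Consider single-node signSGD with Option 1: starting from $x_0\in\mathbb{R}^d$, $x_{k+1}=x_k-\gamma_k\,\mathrm{sign}\,\hat g(x_k)$, where at each iteration $\hat g(x_k)$ is a fresh draw of the estimator at the current point $x_k$. (a) If $\gamma_k=\gamma_0/\sqrt{k+1}$ with $\gamma_0>0$, then for every integer $K\ge 2$, $$\min_{0\le k<K}\mathbb{E}\|\nabla f(x_k)\|_\rho\le\frac{f(x_0)-f^*}{\gamma_0\sqrt K}+\frac{3\gamma_0 d\bar L}{2}\frac{\log K}{\sqrt K}$$ ($\log$ is the natural logarithm). (b) If $\gamma_k\equiv\gamma>0$, then for every $K\ge1$, $$\frac1K\sum_{k=0}^{K-1}\mathbb{E}\|\nabla f(x_k)\|_\rho\le\frac{f(x_0)-f^*}{\gamma K}+\frac{\gamma d\bar L}{2}.$$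
   Context: Notation: $g(x):=\nabla f(x)$. For $t\in\mathbb{R}$, $\mathrm{sign}\,t=1$ if $t>0$, $0$ if $t=0$, $-1$ if $t<0$; for vectors sign is applied entrywise. SPB assumption: for every $x\in\mathbb{R}^d$ one has access to an independent (not necessarily unbiased) random estimator $\hat g(x)\in\mathbb{R}^d$ of $g(x)$ such that for every $i\in\{1,\dots,d\}$ with $g_i(x)\neq0$, the success probability $\rho_i(x):=\mathrm{Prob}(\mathrm{sign}\,\hat g_i(x)=\mathrm{sign}\,g_i(x))$ satisfies $\rho_i(x)>\tfrac12$. The $\rho$-norm is $\|g(x)\|_\rho:=\sum_{i=1}^d(2\rho_i(x)-1)|g_i(x)|$ (terms with $g_i(x)=0$ vanish). Expectations are over all randomness of the algorithm. *)

(* Defs.v *)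
From Stdlib Require Import Reals Lra Lia List.
Open Scope R_scope.

(* Vectors of R^d are represented as  nat -> R ; only indices i < d matter. *)
Definition vec := nat -> R.

Fixpoint fsum (n : nat) (F : nat -> R) : R :=
  match n with
  | O => 0
  | S m => fsum m F + F m
  end.

Fixpoint Rmin_upto (n : nat) (F : nat -> R) : R :=
  match n with
  | O => F O
  | S m => Rmin (Rmin_upto m F) (F (S m))
  end.

Definition sign (t : R) : R :=
  match total_order_T t 0 with
  | inleft (left _) => -1
  | inleft (right _) => 0
  | inright _ => 1
  end.

Definition upd (x : vec) (i : nat) (v : R) : vec :=
  fun j => if Nat.eqb j i then v else x j.

(* Enumeration (without repetition) of all sign vectors in {-1,0,1}^d,
   represented as vectors that vanish at indices >= d. *)
Fixpoint signvecs (d : nat) : list vec :=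
  match d with
  | O => (fun _ => 0) :: nil
  | S n => flat_map (fun s => map (fun v => upd s n v) ((-1) :: 0 :: 1 :: nil))
                    (signvecs n)
  end.

Definition lsum (l : list vec) (F : vec -> R) : R :=
  fold_right (fun s acc => F s + acc) 0 l.

(* A law of the sign of the estimator at x:  p x s = Prob(sign ghat(x) = s). *)
Definition sign_law (d : nat) (p : vec -> vec -> R) : Prop :=
  (forall x s, 0 <= p x s) /\ (forall x, lsum (signvecs d) (p x) = 1).

Definition rho (d : nat) (p : vec -> vec -> R) (g : vec -> vec) (x : vec) (i : nat) : R :=
  lsum (signvecs d) (fun s => if Req_EM_T (s i) (sign (g x i)) then p x s else 0).

Definition SPB (d : nat) (p : vec -> vec -> R) (g : vec -> vec) : Prop :=
  forall x i, (i < d)%nat -> g x i <> 0 -> rho d p g x i > 1/2.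

Definition rho_norm (d : nat) (p : vec -> vec -> R) (g : vec -> vec) (x : vec) : R :=
  fsum d (fun i => (2 * rho d p g x i - 1) * Rabs (g x i)).

(* Eiter d p gamma j k x h = E[ h(x_{j+k}) | x_j = x ] for the signSGD chain
   x_{m+1} = x_m - gamma_m * sign ghat(x_m), with fresh independent draws. *)
Fixpoint Eiter (d : nat) (p : vec -> vec -> R) (gamma : nat -> R)
         (j k : nat) (x : vec) (h : vec -> R) : R :=
  match k with
  | O => h x
  | S k' => lsum (signvecs d)
              (fun s => p x s * Eiter d p gamma (S j) k' (fun i => x i - gamma j * s i) h)
  end.

Definition Egrad (d : nat) (p : vec -> vec -> R) (g : vec -> vec) (gamma : nat -> R)
           (x0 : vec) (k : nat) : R :=
  Eiter d p gamma 0 k x0 (rho_norm d p g).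

(* Main.v *)
Require Import Defs.
From Stdlib Require Import Reals Lra Lia List.
Open Scope R_scope.

Lemma lsum_ext (l : list vec) F G : (forall s, In s l -> F s = G s) -> lsum l F = lsum l G.
Proof. induction l; simpl; intros H; auto. rewrite H by auto. rewrite IHl; auto. Qed.

Lemma lsum_le (l : list vec) F G : (forall s, In s l -> F s <= G s) -> lsum l F <= lsum l G.
Proof. induction l; simpl; intros H; [lra|]. specialize (IHl (fun s Hs => H s (or_intror Hs))). specialize (H a (or_introl eq_refl)). lra. Qed.

Lemma lsum_lin (l : list vec) a b F G : lsum l (fun s => a * F s + b * G s) = a * lsum l F + b * lsum l G.
Proof. induction l; simpl; [ring|]. rewrite IHl. ring. Qed.

Lemma lsum_scal (l : list vec) a F : lsum l (fun s => a * F s) = a * lsum l F.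
Proof. induction l; simpl; [ring|]. rewrite IHl. ring. Qed.

Lemma lsum_plus (l : list vec) F G : lsum l (fun s => F s + G s) = lsum l F + lsum l G.
Proof. induction l; simpl; [ring|]. rewrite IHl. ring. Qed.

Lemma fsum_ext n F G : (forall i, (i < n)%nat -> F i = G i) -> fsum n F = fsum n G.
Proof. induction n; simpl; intros H; auto. rewrite H by lia. rewrite IHn; auto. Qed.

Lemma fsum_le n F G : (forall i, (i < n)%nat -> F i <= G i) -> fsum n F <= fsum n G.
Proof. induction n; simpl; intros H; [lra|]. assert (H1 := H n ltac:(lia)).
  assert (fsum n F <= fsum n G) by (apply IHn; intros; apply H; lia). lra. Qed.

Lemma fsum_scal n a F : fsum n (fun i => a * F i) = a * fsum n F.
Proof. induction n; simpl; [ring|]. rewrite IHn. ring. Qed.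

Lemma fsum_plus n F G : fsum n (fun i => F i + G i) = fsum n F + fsum n G.
Proof. induction n; simpl; [ring|]. rewrite IHn. ring. Qed.

Lemma fsum_const n c : fsum n (fun _ => c) = INR n * c.
Proof. induction n; simpl fsum; [simpl; ring|]. rewrite IHn, S_INR. ring. Qed.

Lemma lsum_fsum (l : list vec) n (F : vec -> nat -> R) :
  lsum l (fun s => fsum n (F s)) = fsum n (fun i => lsum l (fun s => F s i)).
Proof. induction n; simpl.
  - induction l; simpl; [ring|]. rewrite IHl; ring.
  - rewrite lsum_plus, IHn. reflexivity. Qed.

Lemma signvecs_vals d s : In s (signvecs d) -> forall i, s i = -1 \/ s i = 0 \/ s i = 1.
Proof.
  revert s; induction d; simpl; intros s Hs i.
  - destruct Hs as [<-|[]]; auto.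
  - apply in_flat_map in Hs. destruct Hs as [s' [Hs' Hm]].
    unfold upd in Hm. simpl in Hm.
    destruct Hm as [<-|[<-|[<-|[]]]]; (destruct (Nat.eqb i d); [auto|apply IHd; auto]).
Qed.

Lemma sign_pos t : 0 < t -> sign t = 1.
Proof. unfold sign; destruct (total_order_T t 0) as [[|]|]; lra. Qed.
Lemma sign_neg t : t < 0 -> sign t = -1.
Proof. unfold sign; destruct (total_order_T t 0) as [[|]|]; lra. Qed.

Lemma Rmin_upto_le n F k : (k <= n)%nat -> Rmin_upto n F <= F k.
Proof. induction n; intros Hk; simpl.
  - replace k with 0%nat by lia. lra.
  - destruct (Nat.eq_dec k (S n)) as [->|Hne]. apply Rmin_r.
    eapply Rle_trans; [apply Rmin_l|]. apply IHn; lia. Qed.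

Lemma Eiter_S d p gam j k x h : Eiter d p gam j (S k) x h =
  lsum (signvecs d) (fun s => p x s * Eiter d p gam (S j) k (fun i => x i - gam j * s i) h).
Proof. reflexivity. Qed.

Lemma Eiter_ext d p gam k : forall j x h1 h2, (forall y, h1 y = h2 y) ->
  Eiter d p gam j k x h1 = Eiter d p gam j k x h2.
Proof. induction k; intros j x h1 h2 H; simpl; auto.
  apply lsum_ext; intros s _. rewrite (IHk _ _ h1 h2 H). reflexivity. Qed.

Lemma Eiter_mono d p gam k : (forall x s, 0 <= p x s) -> forall j x h1 h2, (forall y, h1 y <= h2 y) ->
  Eiter d p gam j k x h1 <= Eiter d p gam j k x h2.
Proof. intros Hp; induction k; intros j x h1 h2 H; simpl; auto.
  apply lsum_le; intros s _. apply Rmult_le_compat_l; auto. Qed.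

Lemma Eiter_plus d p gam k : forall j x h1 h2,
  Eiter d p gam j k x (fun y => h1 y + h2 y) = Eiter d p gam j k x h1 + Eiter d p gam j k x h2.
Proof. induction k; intros j x h1 h2; simpl; auto.
  rewrite <- lsum_plus. apply lsum_ext; intros s _. rewrite IHk. ring. Qed.

Lemma Eiter_scal d p gam k : forall j x c h,
  Eiter d p gam j k x (fun y => c * h y) = c * Eiter d p gam j k x h.
Proof. induction k; intros j x c h; simpl; auto.
  rewrite <- lsum_scal. apply lsum_ext; intros s _. rewrite IHk. ring. Qed.

Lemma Eiter_const d p gam k : sign_law d p -> forall j x c,
  Eiter d p gam j k x (fun _ => c) = c.
Proof. intros [_ Hl]; induction k; intros j x c; simpl; auto.
  transitivity (lsum (signvecs d) (fun s => c * p x s)).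
  apply lsum_ext; intros s _. rewrite IHk. ring.
  rewrite lsum_scal, Hl. ring. Qed.

Lemma Eiter_tower d p gam k : forall j x h,
  Eiter d p gam j (S k) x h = Eiter d p gam j k x (fun y => Eiter d p gam (j + k) 1 y h).
Proof. induction k; intros j x h.
  - simpl Eiter at 2. rewrite Nat.add_0_r. reflexivity.
  - rewrite Eiter_S, Eiter_S. apply lsum_ext; intros s _. rewrite IHk.
    replace (S j + k)%nat with (j + S k)%nat by lia. reflexivity. Qed.

Lemma key d p g x i : sign_law d p ->
  (2 * rho d p g x i - 1) * Rabs (g x i) <=
  g x i * lsum (signvecs d) (fun s => p x s * s i).
Proof.
  intros [Hp Hl]. unfold rho.
  destruct (Rtotal_order (g x i) 0) as [Hn|[H0|Hpos]].
  - rewrite (sign_neg _ Hn), Rabs_left by lra.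
    set (r := lsum _ _).
    assert (lsum (signvecs d) (fun s => p x s * s i) <= 1 * lsum (signvecs d) (p x) + (-2) * r).
    { unfold r. rewrite <- lsum_lin. apply lsum_le; intros s Hs.
      specialize (Hp x s). destruct (Req_EM_T (s i) (-1)) as [e|ne].
      rewrite e; lra. destruct (signvecs_vals d s Hs i) as [e|[e|e]]; rewrite e in *; lra. }
    rewrite Hl in H. nra.
  - rewrite H0. rewrite Rabs_R0. lra.
  - rewrite (sign_pos _ Hpos), Rabs_right by lra.
    set (r := lsum _ _).
    assert (2 * r + (-1) * lsum (signvecs d) (p x) <= lsum (signvecs d) (fun s => p x s * s i)).
    { unfold r. rewrite <- lsum_lin. apply lsum_le; intros s Hs.
      specialize (Hp x s). destruct (Req_EM_T (s i) 1) as [e|ne].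
      rewrite e; lra. destruct (signvecs_vals d s Hs i) as [e|[e|e]]; rewrite e in *; lra. }
    rewrite Hl in H. nra.
Qed.

Lemma onestep d f g L p gam j y :
  (forall i, (i < d)%nat -> 0 <= L i) ->
  (forall x y : vec, f y <= f x + fsum d (fun i => g x i * (y i - x i))
                + fsum d (fun i => L i / 2 * (y i - x i) ^ 2)) ->
  sign_law d p -> 0 <= gam j ->
  Eiter d p gam j 1 y f <= f y + (- gam j) * rho_norm d p g y + gam j ^ 2 * fsum d (fun i => L i / 2).
Proof.
  intros HL Hs Hlaw Hg. pose proof Hlaw as [Hp Hl].
  set (c := gam j). set (C := fsum d (fun i => L i / 2)).
  change (Eiter d p gam j 1 y f) with
    (lsum (signvecs d) (fun s => p y s * f (fun i => y i - c * s i))).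
  apply Rle_trans with (lsum (signvecs d) (fun s => p y s * (f y + fsum d (fun i => (- c) * (g y i * s i))) + (c^2 * C) * p y s)).
  { apply lsum_le; intros s Hsv.
    apply Rle_trans with (p y s * (f y + fsum d (fun i => (- c) * (g y i * s i)) + c^2*C)); [|right; ring].
    apply Rmult_le_compat_l; auto.
    eapply Rle_trans; [apply (Hs y)|].
    assert (fsum d (fun i => g y i * (y i - c * s i - y i)) = fsum d (fun i => (- c) * (g y i * s i))).
    { apply fsum_ext; intros; ring. }
    assert (fsum d (fun i => L i / 2 * (y i - c * s i - y i) ^ 2) <= c^2 * C).
    { unfold C. rewrite <- fsum_scal. apply fsum_le; intros i Hi.
      specialize (HL i Hi). destruct (signvecs_vals d s Hsv i) as [e|[e|e]]; rewrite e; nra. }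
    lra. }
  rewrite lsum_plus, lsum_scal, Hl.
  assert (E : lsum (signvecs d) (fun s => p y s * (f y + fsum d (fun i => - c * (g y i * s i))))
     = f y + fsum d (fun i => (- c) * (g y i * lsum (signvecs d) (fun s => p y s * s i)))).
  { transitivity (lsum (signvecs d) (fun s => f y * p y s + fsum d (fun i => - c * g y i * (p y s * s i)))).
    apply lsum_ext; intros s _. rewrite Rmult_plus_distr_l, <- fsum_scal.
    f_equal; [ring|]. apply fsum_ext; intros; ring.
    rewrite lsum_plus, lsum_scal, Hl, lsum_fsum. f_equal; [ring|].
    apply fsum_ext; intros i _. rewrite lsum_scal. ring. }
  rewrite E.
  assert (fsum d (fun i => - c * (g y i * lsum (signvecs d) (fun s => p y s * s i))) <= - c * rho_norm d p g y).
  { unfold rho_norm. rewrite <- fsum_scal. apply fsum_le; intros i _.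
    pose proof (key d p g y i Hlaw). rewrite <- !Ropp_mult_distr_l. apply Ropp_le_contravar. apply Rmult_le_compat_l; auto. }
  lra.
Qed.

Lemma telesc d f g L p gam x0 :
  (forall i, (i < d)%nat -> 0 <= L i) ->
  (forall x y : vec, f y <= f x + fsum d (fun i => g x i * (y i - x i))
                + fsum d (fun i => L i / 2 * (y i - x i) ^ 2)) ->
  sign_law d p -> (forall k, 0 <= gam k) -> forall K,
  fsum K (fun k => gam k * Egrad d p g gam x0 k) <=
  f x0 - Eiter d p gam 0 K x0 f + fsum d (fun i => L i / 2) * fsum K (fun k => gam k ^ 2).
Proof.
  intros HL Hs Hlaw Hg. pose proof Hlaw as [Hp Hl]. set (C := fsum d (fun i => L i / 2)).
  induction K.
  - simpl. lra.
  - simpl fsum.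
    assert (Eiter d p gam 0 (S K) x0 f <= Eiter d p gam 0 K x0 f + (- gam K) * Egrad d p g gam x0 K + gam K ^ 2 * C).
    { rewrite Eiter_tower. simpl (0 + K)%nat.
      eapply Rle_trans. apply Eiter_mono; auto. intros y. apply (onestep d f g L p gam K y); auto.
      rewrite Eiter_plus, Eiter_plus, Eiter_scal, Eiter_const by auto. unfold Egrad, C. lra. }
    rewrite Rmult_plus_distr_l.
    replace ((- gam K) * Egrad d p g gam x0 K) with (- (gam K * Egrad d p g gam x0 K)) in H by ring.
    replace (gam K ^ 2 * C) with (C * gam K ^ 2) in H by ring. idtac.
    clear -IHK H. simpl in *. lra.
Qed.

Lemma ln2_gt : 1/2 < ln 2.
Proof.
  assert (H1 : exp (1/2) * exp (1/2) = exp 1) by (rewrite <- exp_plus; f_equal; lra).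
  pose proof exp_le_3. pose proof (exp_pos (1/2)).
  assert (exp (1/2) < 2) by nra.
  rewrite <- (ln_exp (1/2)). apply ln_increasing; auto.
Qed.

Lemma ln_step (K : nat) : (1 <= K)%nat -> / (INR K + 1) <= ln (INR K + 1) - ln (INR K).
Proof.
  intros HK. assert (HK' : 1 <= INR K) by (apply (le_INR 1); lia).
  set (t := / (INR K + 1)).
  assert (Ht : INR K / (INR K + 1) = 1 + - t) by (unfold t; field; lra).
  assert (ln (INR K / (INR K + 1)) <= - t).
  { rewrite <- (ln_exp (- t)). rewrite Ht.
    destruct (Rle_lt_or_eq_dec _ _ (exp_ineq1_le (-t))) as [Hlt|Heq].
    left. apply ln_increasing; auto. rewrite <- Ht. apply Rdiv_lt_0_compat; lra.
    rewrite Heq. lra. }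
  unfold Rdiv in H. rewrite ln_mult, ln_Rinv in H by (try apply Rinv_0_lt_compat; lra). lra.
Qed.

Lemma harm (K : nat) : (2 <= K)%nat -> fsum K (fun k => / (INR k + 1)) <= 3 * ln (INR K).
Proof.
  intros HK. induction K as [|K IH]; [lia|].
  destruct (Nat.eq_dec K 1) as [->|Hne].
  - simpl. pose proof ln2_gt. replace (1+1) with 2 by ring. lra.
  - simpl fsum. rewrite S_INR. pose proof (ln_step K ltac:(lia)). specialize (IH ltac:(lia)). idtac.
    assert (0 < / (INR K + 1)) by (apply Rinv_0_lt_compat; pose proof (pos_INR K); lra). lra.
Qed.

Theorem theorem1 (d : nat) (f : vec -> R) (g : vec -> vec) (fstar : R)
  (L : nat -> R) (p : vec -> vec -> R) (x0 : vec)
  (* f is a function on R^d: depends only on the first d coordinates *)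
  (Hf_dim : forall x y : vec, (forall i, (i < d)%nat -> x i = y i) -> f x = f y)
  (* g x i is the i-th partial derivative of f at x *)
  (Hgrad : forall x i, (i < d)%nat ->
     derivable_pt_lim (fun t => f (upd x i (x i + t))) 0 (g x i))
  (Hbelow : forall x, fstar <= f x)
  (HL : forall i, (i < d)%nat -> 0 <= L i)
  (Hsmooth : forall x y : vec,
     f y <= f x + fsum d (fun i => g x i * (y i - x i))
                + fsum d (fun i => L i / 2 * (y i - x i) ^ 2))
  (Hlaw : sign_law d p)
  (Hspb : SPB d p g) :
  let Lbar := / INR d * fsum d L in
  (forall gamma0 : R, 0 < gamma0 -> forall K : nat, (2 <= K)%nat ->
     Rmin_upto (K - 1) (Egrad d p g (fun k => gamma0 / sqrt (INR k + 1)) x0)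
     <= (f x0 - fstar) / (gamma0 * sqrt (INR K))
        + 3 * gamma0 * INR d * Lbar / 2 * (ln (INR K) / sqrt (INR K)))
  /\
  (forall gamma : R, 0 < gamma -> forall K : nat, (1 <= K)%nat ->
     / INR K * fsum K (Egrad d p g (fun _ => gamma) x0)
     <= (f x0 - fstar) / (gamma * INR K) + gamma * INR d * Lbar / 2).
Proof.
  intros Lbar. pose proof Hlaw as [Hp Hl].
  set (C := fsum d (fun i => L i / 2)).
  assert (HC : 0 <= C).
  { unfold C. rewrite <- (Rmult_0_r (INR d)), <- fsum_const. apply fsum_le; intros i Hi.
    specialize (HL i Hi). lra. }
  assert (HdL : INR d * Lbar = 2 * C).
  { unfold Lbar, C. destruct d as [|d'].
    - simpl. ring.
    - rewrite (fsum_ext _ L (fun i => 2 * (L i / 2))) by (intros; field). rewrite fsum_scal.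
      field. apply not_0_INR. lia. }
  assert (HCdef : fsum d (fun i => L i / 2) = C) by reflexivity.
  clearbody Lbar C.
  assert (Hphi : forall gam K, fstar <= Eiter d p gam 0 K x0 f).
  { intros gam K. rewrite <- (Eiter_const d p gam K Hlaw 0 x0 fstar) at 1.
    apply Eiter_mono; auto. }
  assert (HD : 0 <= f x0 - fstar) by (specialize (Hbelow x0); lra).
  split.
  - intros g0 Hg0 K HK.
    set (gam := fun k : nat => g0 / sqrt (INR k + 1)).
    assert (Hgp : forall k, 0 < gam k).
    { intros k. unfold gam. apply Rdiv_lt_0_compat; auto. apply sqrt_lt_R0. pose proof (pos_INR k); lra. }
    pose proof (telesc d f g L p gam x0 HL Hsmooth Hlaw (fun k => Rlt_le _ _ (Hgp k)) K) as T.
    rewrite HCdef in T. specialize (Hphi gam K).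
    assert (Hsq : fsum K (fun k => gam k ^ 2) = g0 ^ 2 * fsum K (fun k => / (INR k + 1))).
    { rewrite <- fsum_scal. apply fsum_ext; intros k _. unfold gam, Rdiv.
      rewrite Rpow_mult_distr, pow_inv, pow2_sqrt; auto. pose proof (pos_INR k); lra. }
    pose proof (harm K HK) as Hh.
    set (m := Rmin_upto (K - 1) (Egrad d p g gam x0)).
    assert (Hm : m * fsum K gam <= fsum K (fun k => gam k * Egrad d p g gam x0 k)).
    { rewrite <- fsum_scal. apply fsum_le; intros k Hk.
      rewrite (Rmult_comm m). apply Rmult_le_compat_l. left; auto. apply Rmin_upto_le; lia. }
    assert (HK0 : 0 < INR K) by (apply lt_0_INR; lia).
    set (s := sqrt (INR K)).
    assert (Hs : 0 < s) by (apply sqrt_lt_R0; auto).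
    assert (Hss : s * s = INR K) by (apply sqrt_sqrt; lra).
    assert (HG : g0 * s <= fsum K gam).
    { apply Rle_trans with (fsum K (fun _ => g0 / s)).
      rewrite fsum_const. rewrite <- Hss. right. field. lra.
      apply fsum_le; intros k Hk. unfold gam, Rdiv. apply Rmult_le_compat_l; [lra|].
      apply Rinv_le_contravar. apply sqrt_lt_R0. pose proof (pos_INR k); lra.
      apply sqrt_le_1_alt. rewrite <- S_INR. apply le_INR. lia. }
    assert (Hln : 0 < ln (INR K)).
    { rewrite <- ln_1. apply ln_increasing; [lra|]. replace 1 with (INR 1) by reflexivity. apply lt_INR. lia. }
    replace (3 * g0 * INR d * Lbar / 2) with (3 * g0 * C)
      by (rewrite (Rmult_assoc (3 * g0) (INR d) Lbar), HdL; field).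
    fold s.
    replace ((f x0 - fstar) / (g0 * s) + 3 * g0 * C * (ln (INR K) / s))
      with ((f x0 - fstar + 3 * C * g0 ^ 2 * ln (INR K)) / (g0 * s)) by (field; lra).
    assert (Hnum : 0 <= f x0 - fstar + 3 * C * g0 ^ 2 * ln (INR K)).
    { assert (0 <= C * g0 ^ 2 * ln (INR K)).
      { apply Rmult_le_pos; [apply Rmult_le_pos|]; try lra. apply pow_le; lra. } lra. }
    destruct (Rle_or_lt m 0) as [Hm0|Hm0].
    + apply Rle_trans with 0; auto. unfold Rdiv. apply Rmult_le_pos; auto.
      left. apply Rinv_0_lt_compat. nra.
    + assert (m * (g0 * s) <= f x0 - fstar + 3 * C * g0 ^ 2 * ln (INR K)).
      { apply Rle_trans with (m * fsum K gam). apply Rmult_le_compat_l; lra.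
        rewrite Hsq in T.
        assert (C * (g0 ^ 2 * fsum K (fun k => / (INR k + 1))) <= C * (g0 ^ 2 * (3 * ln (INR K)))).
        { apply Rmult_le_compat_l; auto. apply Rmult_le_compat_l; auto. apply pow_le; lra. }
        lra. }
      apply Rmult_le_reg_r with (g0 * s). nra.
      unfold Rdiv. rewrite Rmult_assoc, Rinv_l, Rmult_1_r; [lra|]. nra.
  - intros ga Hga K HK.
    pose proof (telesc d f g L p (fun _ => ga) x0 HL Hsmooth Hlaw (fun _ => Rlt_le _ _ Hga) K) as T.
    rewrite HCdef in T. specialize (Hphi (fun _ => ga) K).
    rewrite fsum_scal, fsum_const in T.
    assert (HK0 : 0 < INR K) by (apply lt_0_INR; lia).
    replace (ga * INR d * Lbar / 2) with (ga * C)
      by (rewrite (Rmult_assoc ga (INR d) Lbar), HdL; field).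
    replace ((f x0 - fstar) / (ga * INR K) + ga * C)
      with ((f x0 - fstar + C * (INR K * ga ^ 2)) / (ga * INR K)) by (field; lra).
    replace (/ INR K * fsum K (Egrad d p g (fun _ => ga) x0))
      with ((ga * fsum K (Egrad d p g (fun _ => ga) x0)) / (ga * INR K)) by (field; lra).
    unfold Rdiv. apply Rmult_le_compat_r. left; apply Rinv_0_lt_compat; nra. lra.
Qed.
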